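(* Let $K$ be a field of characteristic $0$ or $>n$ and $P=K[v_1,\dots,v_n]$. Let $p\in P$ be a monomial and write $p=v_1^rv$ with $v$ a monomial not divisible by $v_1$. Then every Artin monomial occurring (with nonzero coefficient) in the Artin reduction of $p$ has $v_1$-exponent at least $r$.
   Context: Let $e_1,\dots,e_n$ be the elementary symmetric polynomials in $v_1,\dots,v_n$. An Artin monomial is $v_1^{l_1}\cdots v_n^{l_n}$ with $0\le l_i\le n-i$ for all $i$; the Artin monomials form a $K$-basis of $P/(e_1,\dots,e_n)$. The Artin reduction of $p\in P$ is the unique $K$-linear combination $p'$ of Artin monomials with $p\equiv p'$ modulo $(e_1,\dots,e_n)$. *)

(* Defs.v *)
From HB Require Import structures.
From mathcomp Require Import all_boot all_order all_algebra.
From mathcomp Require Import mpoly.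
Set Implicit Arguments. Unset Strict Implicit. Unset Printing Implicit Defensive.
Import GRing.Theory.
Local Open Scope ring_scope.

(* Variables v_1..v_n are indexed by i : 'I_n (0-based), so v_{i+1} = 'X_i. *)

Definition artin_monomial (n : nat) (m : 'X_{1..n}) : bool :=
  [forall i : 'I_n, (m i <= n - i.+1)%N].

Definition artin_combination (n : nat) (K : fieldType) (p : {mpoly K[n]}) : Prop :=
  forall m : 'X_{1..n}, p@_m != 0 -> artin_monomial m.

Definition in_esym_ideal (n : nat) (K : fieldType) (p : {mpoly K[n]}) : Prop :=
  exists q : 'I_n -> {mpoly K[n]}, p = \sum_(i < n) q i * mesym n K i.+1.

(* p' is the Artin reduction of p: an Artin combination with p = p' mod (e_1..e_n)
   (unique, since Artin monomials form a basis of P/(e_1..e_n)). *)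
Definition artin_reduction_of (n : nat) (K : fieldType) (p p' : {mpoly K[n]}) : Prop :=
  artin_combination p' /\ in_esym_ideal (p - p').

(* Main.v *)
Require Import Defs.
From HB Require Import structures.
From mathcomp Require Import all_boot all_order all_algebra.
From mathcomp Require Import mpoly.
From mathcomp Require Import zify.
Set Implicit Arguments. Unset Strict Implicit. Unset Printing Implicit Defensive.
Import GRing.Theory.
Local Open Scope ring_scope.

Definition inI (A : comNzRingType) (N : nat) (g : nat -> A) (x : A) :=
  exists q : nat -> A, x = \sum_(k < N) q k * g k.

Section Ideal.
Variables (A : comNzRingType) (N : nat) (g : nat -> A).
Lemma inI0 : inI N g 0.
Proof. by exists (fun _ => 0); rewrite big1 // => k _; rewrite mul0r. Qed.
Lemma inID x y : inI N g x -> inI N g y -> inI N g (x + y).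
Proof.
move=> [q1 ->] [q2 ->]; exists (fun k => q1 k + q2 k).
by rewrite -big_split; apply: eq_bigr => k _; rewrite mulrDl.
Qed.
Lemma inIN x : inI N g x -> inI N g (- x).
Proof.
move=> [q1 ->]; exists (fun k => - q1 k).
by rewrite -sumrN; apply: eq_bigr => k _; rewrite mulNr.
Qed.
Lemma inIB x y : inI N g x -> inI N g y -> inI N g (x - y).
Proof. by move=> hx hy; apply: inID => //; apply: inIN. Qed.
Lemma inIM y x : inI N g x -> inI N g (y * x).
Proof.
move=> [q1 ->]; exists (fun k => y * q1 k).
by rewrite mulr_sumr; apply: eq_bigr => k _; rewrite mulrA.
Qed.
Lemma inIMr y x : inI N g x -> inI N g (x * y).
Proof. by rewrite mulrC; apply: inIM. Qed.
Lemma inI_gen k : (k < N)%N -> inI N g (g k).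
Proof.
move=> kN; exists (fun j => (j == k)%:R).
rewrite (bigD1 (Ordinal kN)) //= eqxx mul1r big1 ?addr0 // => j.
by rewrite -val_eqE /= => /negbTE ->; rewrite mul0r.
Qed.
Lemma inI_sum (I : Type) (r : seq I) (P : pred I) (F : I -> A) :
  (forall i, P i -> inI N g (F i)) -> inI N g (\sum_(i <- r | P i) F i).
Proof.
move=> H; elim/big_rec: _ => [|i x Pi hx]; first exact: inI0.
by apply: inID => //; apply: H.
Qed.
End Ideal.

Lemma inI_morph (A B : comNzRingType) (phi : {rmorphism A -> B}) N g N' g' x :
  (forall k, (k < N)%N -> inI N' g' (phi (g k))) -> inI N g x -> inI N' g' (phi x).
Proof.
move=> H [q ->]; rewrite rmorph_sum; apply: inI_sum => k _.
by rewrite rmorphM; apply: inIM; apply: H.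
Qed.

Definition Fpoly (R : comNzRingType) n : {poly {mpoly R[n]}} :=
  \prod_(i < n) ('X - ('X_i)%:P).

Definition gens (R : comNzRingType) n (f : {poly R}) (k : nat) : {mpoly R[n]} :=
  (Fpoly R n - map_poly (@mpolyC n R) f)`_k.

Definition asupp (R : comNzRingType) n (p : {mpoly R[n]}) :=
  forall m, p@_m != 0 -> artin_monomial m.

Definition tailm n (m : 'X_{1..n.+1}) : 'X_{1..n} := [multinom m (lift ord0 j) | j < n].
Definition consm n (j : nat) (m : 'X_{1..n}) : 'X_{1..n.+1} :=
  [multinom (if unlift ord0 i is Some k then m k else j) | i < n.+1].

Lemma tailmE n (m : 'X_{1..n.+1}) (j : 'I_n) : tailm m j = m (lift ord0 j) :> nat.
Proof. by rewrite /tailm mnmE. Qed.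
Lemma consm0 n j (m : 'X_{1..n}) : consm j m ord0 = j.
Proof. by rewrite /consm mnmE unlift_none. Qed.
Lemma consmS n j (m : 'X_{1..n}) k : consm j m (lift ord0 k) = m k.
Proof. by rewrite /consm mnmE liftK. Qed.
Lemma consm_tail n (m : 'X_{1..n.+1}) : consm (m ord0) (tailm m) = m.
Proof.
apply/mnmP => i; rewrite /consm mnmE; case: unliftP => [k ->|->] //.
by rewrite tailmE.
Qed.
Lemma tailm_cons n j (m : 'X_{1..n}) : tailm (consm j m) = m.
Proof. by apply/mnmP => k; rewrite tailmE consmS. Qed.

Lemma artin_cons n j (m : 'X_{1..n}) :
  artin_monomial (consm j m) = (j <= n)%N && artin_monomial m.
Proof.
rewrite /artin_monomial; apply/forallP/andP => [H|[hj /forallP H] i].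
  split; first by have := H ord0; rewrite consm0 subn1.
  by apply/forallP => k; have := H (lift ord0 k); rewrite consmS /= subSS.
case: (unliftP ord0 i) => [k ->|->]; first by rewrite consmS /= subSS; apply: H.
by rewrite consm0 subn1.
Qed.


Lemma polyC_horner_X (R : comNzRingType) (f : {poly R}) : (map_poly polyC f).['X] = f.
Proof.
transitivity (\poly_(i < size f) f`_i); last exact: coefK.
rewrite /map_poly horner_poly poly_def.
apply: eq_bigr => i _ /=. by rewrite mul_polyC.
Qed.

Lemma coef_from_supp (R : comNzRingType) n (p : {mpoly R[n]}) x :
  p@_x = \sum_(m <- msupp p) p@_m * (m == x)%:R.
Proof.
rewrite {1}(mpolyE p) raddf_sum /=; apply: eq_bigr => m _.
by rewrite mcoeffZ mcoeffX.
Qed.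

Lemma size_index_enum_ord n : size (index_enum 'I_n) = n.
Proof. by rewrite /index_enum unlock -enumT size_enum_ord. Qed.

Lemma Fpoly_coef (R : comNzRingType) n : (Fpoly R n)`_n = 1.
Proof.
have := monic_prod_XsubC (index_enum 'I_n) xpredT (fun i => 'X_i : {mpoly R[n]}).
rewrite /Fpoly monicE lead_coefE size_prod_XsubC size_index_enum_ord /=.
by move/eqP.
Qed.

Lemma Fpoly_size (R : comNzRingType) n : size (Fpoly R n) = n.+1.
Proof. by rewrite /Fpoly size_prod_XsubC size_index_enum_ord. Qed.

Lemma map_Fpoly (R : comNzRingType) k (B : comNzRingType)
    (g : {rmorphism {mpoly R[k]} -> B}) :
  map_poly g (Fpoly R k) = \prod_(i < k) ('X - (g 'X_i)%:P).
Proof. by rewrite rmorph_prod; apply: eq_bigr => i _; exact: map_polyXsubC. Qed.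

Lemma map_Fpoly_mmap (R : comNzRingType) k (B : comNzRingType)
    (phi : {rmorphism R -> B}) (h : 'I_k -> B) :
  map_poly (mmap phi h) (Fpoly R k) = \prod_(i < k) ('X - (h i)%:P).
Proof.
rewrite (map_Fpoly (mmap phi h)); apply: eq_bigr => i _; congr ('X - _%:P).
exact: (etrans (mmapX h phi U_(i)) (mmap1U h i)).
Qed.


Lemma uniq_artin n : forall (R : comNzRingType) (f : {poly R}),
  f \is monic -> size f = n.+1 -> forall p : {mpoly R[n]},
  asupp p -> inI n (gens n f) p -> p = 0.
Proof.
elim: n => [|n IH] R f fmon fsz p hp hI.
  by case: hI => q ->; rewrite big_ord0.
have mkf : mk_monic f = f by rewrite /mk_monic fsz fmon.
pose S := {poly %/ f}.
pose toS : {rmorphism R -> S} := in_qpoly f \o polyC.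
pose xb : S := in_qpoly f 'X.
pose phi : {rmorphism R -> {mpoly S[n]}} := @mpolyC n S \o toS.
pose h : 'I_n.+1 -> {mpoly S[n]} :=
  fun i => if unlift ord0 i is Some j then 'X_j else xb%:MP.
pose psi := mmap phi h.
have psiX m : psi 'X_[m] = (xb ^+ (m ord0))%:MP * 'X_[tailm m].
  rewrite /psi mmapX /mmap1 big_ord_recl /h unlift_none rmorphXn /=.
  congr (_ * _); rewrite mpolyXE_id; apply: eq_bigr => j _.
  by rewrite liftK tailmE.
pose P (m' : 'X_{1..n}) : {poly R} :=
  \sum_(m <- msupp p | tailm m == m') (p@_m)%:P * 'X^(m ord0).
have psiP m' : (psi p)@_m' = in_qpoly f (P m').
  rewrite /psi {1}/mmap raddf_sum rmorph_sum /= [RHS]big_mkcond /=.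
  apply: eq_bigr => m _; rewrite -(mmapX h phi) -/psi psiX.
  rewrite mulrA -rmorphM mcoeffCM mcoeffX /=.
  case: eqP => _; last by rewrite mulr0.
  by rewrite mulr1 rmorphM rmorphXn.
have Pcoef m' j : (P m')`_j = p@_(consm j m').
  rewrite coef_from_supp /P coef_sum big_mkcond /=; apply: eq_bigr => m _.
  rewrite coefCM coefXn.
  have -> : (m == consm j m') = (tailm m == m') && (j == m ord0).
    apply/eqP/andP => [->|[/eqP <- /eqP ->]]; last by rewrite consm_tail.
    by rewrite tailm_cons consm0.
  by case: (tailm m == m'); rewrite ?mulr0 //= eq_sym.
have Psz m' : (size (P m') <= n.+1)%N.
  apply/leq_sizeP => j hj; rewrite Pcoef; apply/eqP; apply: contraT => hc.
  by have := hp _ hc; rewrite artin_cons leqNgt hj.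
have Pin m' : in_qpoly f (P m') = P m' :> {poly R}.
  by apply: in_qpoly_small; rewrite mkf fsz ltnS.
have hpsi : asupp (psi p).
  move=> m'; rewrite psiP => hne.
  have : P m' != 0.
    by apply: contraNneq hne => ->; rewrite rmorph0.
  rewrite -lead_coef_eq0 lead_coefE Pcoef => /hp.
  by rewrite artin_cons => /andP[].
pose fS := map_poly toS f.
have fSroot : root fS xb.
  apply/rootP; rewrite /fS map_poly_comp /xb horner_map polyC_horner_X /=.
  by apply: val_inj => /=; rewrite mkf Pdiv.RingMonic.rmodpp.
have [q fSq] := factor_theorem _ _ fSroot.
have fSmon : fS \is monic by apply: monic_map.
have qmon : q \is monic.
  by rewrite monicE -(lead_coef_Mmonic q (monicXsubC xb)) -fSq -monicE.
have qsz : size q = n.+1.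
  have : size fS = n.+2.
    by rewrite size_map_poly_id0 // (eqP fmon) rmorph1 oner_neq0.
  rewrite fSq size_Mmonic ?monic_neq0 ?monicXsubC // size_XsubC addn2 /=.
  by case.
pose G := Fpoly S n - map_poly (@mpolyC n S) q.
have psiXi (i : 'I_n.+1) : psi 'X_i = h i by rewrite /psi mmapX mmap1U.
have mapF : map_poly psi (Fpoly R n.+1 - map_poly (@mpolyC n.+1 R) f)
    = ('X - (xb%:MP)%:P) * G.
  have -> : forall A B : {poly {mpoly R[n.+1]}},
      map_poly psi (A - B) = map_poly psi A - map_poly psi B.
    by move=> A B; rewrite rmorphB.
  have e2 : map_poly psi (map_poly (@mpolyC n.+1 R) f) = map_poly (@mpolyC n S) fS.
    rewrite -map_poly_comp /fS -map_poly_comp; apply: eq_map_poly => c /=.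
    by rewrite /psi mmapC.
  have e1 : \prod_(i < n) ('X - (h (lift ord0 i))%:P) = Fpoly S n.
    by apply: eq_bigr => j _; rewrite /h liftK.
  have e3 : map_poly (@mpolyC n S) (q * ('X - xb%:P)) =
      map_poly (@mpolyC n S) q * ('X - (xb%:MP)%:P).
    by rewrite rmorphM; congr (_ * _); exact: map_polyXsubC.
  rewrite map_Fpoly_mmap big_ord_recl e1 e2 fSq e3 /G.
  by rewrite /h unlift_none [map_poly _ q * _]mulrC -mulrBr.
have hG j : inI n (gens n q) G`_j.
  case: (ltnP j n) => hj; first exact: inI_gen.
  suff -> : G`_j = 0 by apply: inI0.
  rewrite /G coefB coef_map /=.
  case: (ltngtP j n) hj => // [hj|->] _; last first.
    have qn : q`_n = 1 by rewrite -(eqP qmon) lead_coefE qsz.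
    by rewrite Fpoly_coef qn rmorph1 subrr.
  have /leq_sizeP -> // : (size (Fpoly S n) <= n.+1)%N by rewrite Fpoly_size.
  have /leq_sizeP -> // : (size q <= n.+1)%N by rewrite qsz.
  by rewrite rmorph0 subrr.
have hgen k : (k < n.+1)%N -> inI n (gens n q) (psi (gens n.+1 f k)).
  move=> _.
  have -> : psi (gens n.+1 f k) =
      (map_poly psi (Fpoly R n.+1 - map_poly (@mpolyC n.+1 R) f))`_k.
    by rewrite coef_map.
  rewrite mapF mulrBl coefB coefXM coefCM.
  apply: inIB; last by apply: inIM.
  by case: (k == 0%N); [apply: inI0 | apply: hG].
have hpsiI : inI n (gens n q) (psi p).
  have := inI_morph (phi := mmap phi h) hgen hI; exact.
have psi0 := IH S q qmon qsz (psi p) hpsi hpsiI.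
apply/mpolyP => m; rewrite mcoeff0 -(consm_tail m) -Pcoef.
have : in_qpoly f (P (tailm m)) = 0 by rewrite -psiP psi0 mcoeff0.
move/(congr1 (fun x : S => x : {poly R})); rewrite Pin => ->.
by rewrite coef0.
Qed.


Section Theta.
Variables (R : comNzRingType) (n : nat).

Definition thC : {rmorphism {poly R} -> {mpoly R[n.+1]}} :=
  horner_eval 'X_ord0 \o map_poly (@mpolyC n.+1 R).

Definition thH (j : 'I_n) : {mpoly R[n.+1]} := 'X_(lift ord0 j).

Definition Theta (p : {mpoly {poly R}[n]}) : {mpoly R[n.+1]} := mmap thC thH p.

Lemma thCE c : thC c = (map_poly (@mpolyC n.+1 R) c).['X_ord0].
Proof. by []. Qed.

Lemma thC_C a : thC a%:P = a%:MP.
Proof. by rewrite thCE map_polyC hornerC. Qed.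

Lemma thC_X : thC 'X = 'X_ord0.
Proof. by rewrite thCE map_polyX hornerX. Qed.

Lemma consm_add0 j (m : 'X_{1..n}) : consm j m = (U_(ord0) *+ j + consm 0 m)%MM.
Proof.
apply/mnmP => i; rewrite mnmDE mulmnE mnm1E /consm !mnmE.
case: unliftP => [k ->|->]; first by rewrite (negbTE (neq_lift _ _)) mul0n add0n.
by rewrite eqxx mul1n addn0.
Qed.

Lemma ThetaX m : Theta 'X_[m] = 'X_[consm 0 m].
Proof.
rewrite /Theta mmapX /mmap1 [RHS]mpolyXE_id big_ord_recl consm0 expr0 mul1r.
by apply: eq_bigr => j _; rewrite consmS.
Qed.

Lemma thC_mulX c (m : 'X_{1..n}) :
  thC c * 'X_[consm 0 m] = \sum_(i < size c) c`_i *: 'X_[consm i m].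
Proof.
have hs : (size (map_poly (@mpolyC n.+1 R) c) <= size c)%N.
  by rewrite /map_poly size_poly.
rewrite thCE (horner_coef_wide _ hs) mulr_suml; apply: eq_bigr => i _.
by rewrite coef_map /= mpolyXn -mulrA -mpolyXD -consm_add0 mul_mpolyC.
Qed.

Lemma Theta_ideal (f : {poly R}) (qq : {poly {poly R}}) :
  f \is monic -> size f = n.+2 -> qq \is monic -> size qq = n.+1 ->
  map_poly polyC f - f%:P = qq * ('X - 'X%:P) ->
  (forall k, (k < n)%N -> inI n.+1 (gens n.+1 f) (Theta (gens n qq k)))
  /\ inI n.+1 (gens n.+1 f) (thC f).
Proof.
move=> fmon fsz qmon qsz fq.
pose Th := mmap thC thH.
pose G := map_poly Th (Fpoly {poly R} n - map_poly (@mpolyC n {poly R}) qq).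
pose H := Fpoly R n.+1 - map_poly (@mpolyC n.+1 R) f.
pose x0 : {mpoly R[n.+1]} := 'X_ord0.
have eG : ('X - x0%:P) * G = H + (thC f)%:P.
  have -> : G = map_poly Th (Fpoly {poly R} n)
      - map_poly Th (map_poly (@mpolyC n {poly R}) qq) by rewrite /G rmorphB.
  have e1 : map_poly Th (map_poly (@mpolyC n {poly R}) qq) = map_poly thC qq.
    rewrite -map_poly_comp; apply: eq_map_poly => c /=.
    by rewrite /Th mmapC.
  have e2 : map_poly thC (map_poly polyC f) = map_poly (@mpolyC n.+1 R) f.
    by rewrite -map_poly_comp; apply: eq_map_poly => c; exact: thC_C.
  have e3 : map_poly thC (qq * ('X - 'X%:P)) = map_poly thC qq * ('X - x0%:P).
    rewrite rmorphM; congr (_ * _).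
    by rewrite /x0 -thC_X; exact: map_polyXsubC.
  have e4 : map_poly thC (map_poly polyC f - f%:P) =
      map_poly thC (map_poly polyC f) - (thC f)%:P.
    by rewrite rmorphB; congr (_ - _); exact: map_polyC.
  have e5 : ('X - x0%:P) * map_poly Th (Fpoly {poly R} n) = Fpoly R n.+1.
    by rewrite map_Fpoly_mmap /Fpoly big_ord_recl.
  rewrite mulrBr e5 e1 mulrC -e3 -fq e4 e2 /H.
  by rewrite opprD opprK addrA.
have Gbig j : (n <= j)%N -> G`_j = 0.
  move=> hj; rewrite /G coef_map coefB coef_map /=.
  suff -> : (Fpoly {poly R} n)`_j - (qq`_j)%:MP = 0 by rewrite raddf0.
  case: (ltngtP j n) hj => // [hj|->] _; last first.
    have qn : qq`_n = 1 by rewrite -(eqP qmon) lead_coefE qsz.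
    by rewrite Fpoly_coef qn subrr.
  have /leq_sizeP -> // : (size (Fpoly {poly R} n) <= n.+1)%N by rewrite Fpoly_size.
  have /leq_sizeP -> // : (size qq <= n.+1)%N by rewrite qsz.
  by rewrite subrr.
have rec k : G`_k = H`_(k.+1) + x0 * G`_(k.+1).
  have := congr1 (fun P : {poly {mpoly R[n.+1]}} => P`_(k.+1)) eG.
  rewrite /= mulrBl coefB coefXM coefCM coefD coefC /= addr0 => e.
  by rewrite -e subrK.
have hGall t j : (n <= j + t)%N -> inI n.+1 (gens n.+1 f) (G`_j).
  elim: t j => [|t IHt] j hj; first by move: hj; rewrite addn0 => /Gbig ->; apply: inI0.
  case: (leqP n j) => hnj; first by rewrite Gbig //; apply: inI0.
  rewrite rec; apply: inID; first exact: inI_gen.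
  by apply: inIM; apply: IHt; rewrite addSnnS.
split.
  move=> k hk; have -> : Theta (gens n qq k) = G`_k by rewrite /G coef_map.
  by apply: (hGall n); rewrite leq_addl.
have := congr1 (fun P : {poly {mpoly R[n.+1]}} => P`_0) eG.
rewrite /= mulrBl coefB coefXM coefCM coefD coefC /= sub0r => e.
move: e; set T := horner_eval _ _ => e.
have -> : T = - (x0 * G`_0) - H`_0 by rewrite e addrAC subrr add0r.
apply: inIB; first by apply: inIN; apply: inIM; apply: (hGall n); rewrite leq_addl.
exact: inI_gen.
Qed.
End Theta.


Lemma asuppP (R : comNzRingType) n (p : {mpoly R[n]}) :
  asupp p <-> forall m, ~~ artin_monomial m -> p@_m = 0.
Proof.
split=> [H m hm|H m]; first by apply/eqP; apply: contraNT hm => /H.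
by apply: contraR => /H ->; rewrite eqxx.
Qed.

Lemma asupp_sum (R : comNzRingType) n (I : Type) (r : seq I) (P : pred I)
    (F : I -> {mpoly R[n]}) :
  (forall i, P i -> asupp (F i)) -> asupp (\sum_(i <- r | P i) F i).
Proof.
move=> H; apply/asuppP => m hm; rewrite raddf_sum /= big1 // => i Pi.
by move/asuppP: (H i Pi) => ->.
Qed.

Lemma asuppZ (R : comNzRingType) n c (p : {mpoly R[n]}) : asupp p -> asupp (c *: p).
Proof. by move/asuppP => H; apply/asuppP => m hm; rewrite mcoeffZ H // mulr0. Qed.

Lemma asuppX (R : comNzRingType) n (m : 'X_{1..n}) : artin_monomial m -> asupp ('X_[m] : {mpoly R[n]}).
Proof.
move=> hm; apply/asuppP => m' hm'; rewrite mcoeffX.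
by case: eqP => // e; move: hm'; rewrite -e hm.
Qed.

Lemma exists_qq (R : comNzRingType) n (f : {poly R}) :
  f \is monic -> size f = n.+2 ->
  exists qq : {poly {poly R}}, [/\ qq \is monic, size qq = n.+1 &
    map_poly polyC f - f%:P = qq * ('X - 'X%:P)].
Proof.
move=> fmon fsz.
have hroot : root (map_poly polyC f - f%:P) 'X.
  by apply/rootP; rewrite hornerD hornerN hornerC polyC_horner_X subrr.
have [qq fq] := factor_theorem _ _ hroot.
have szf : size (map_poly polyC f) = n.+2 by rewrite size_map_polyC.
have lf : lead_coef (map_poly polyC f - f%:P) = 1.
  rewrite lead_coefDl; last by rewrite size_opp size_polyC szf; case: (f != 0).
  rewrite lead_coefE szf /= coef_map_id0 ?polyC0 //.
  by have := eqP fmon; rewrite lead_coefE fsz /= => ->.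
have szd : size (map_poly polyC f - f%:P) = n.+2.
  by rewrite size_addl // size_opp size_polyC szf; case: (f != 0).
have qmon : qq \is monic.
  by rewrite monicE -(lead_coef_Mmonic qq (monicXsubC 'X)) -fq lf.
exists qq; split => //.
move: szd; rewrite fq size_Mmonic ?monic_neq0 ?monicXsubC // size_XsubC addn2 /=.
by case.
Qed.

Section Step.
Variables (R : comNzRingType) (n : nat).

Lemma thC_mulX_wide N (c : {poly R}) (m : 'X_{1..n}) : (size c <= N)%N ->
  thC R n c * 'X_[consm 0 m] = \sum_(i < N) c`_i *: 'X_[consm i m].
Proof.
move=> hN.
have hs : (size (map_poly (@mpolyC n.+1 R) c) <= N)%N.
  by rewrite /map_poly (leq_trans (size_poly _ _)).
rewrite thCE (horner_coef_wide _ hs) mulr_suml; apply: eq_bigr => i _.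
by rewrite coef_map /= mpolyXn -mulrA -mpolyXD -consm_add0 mul_mpolyC.
Qed.

Lemma Theta_expand (r' : {mpoly {poly R}[n]}) :
  Theta r' = \sum_(m' <- msupp r') thC R n r'@_m' * 'X_[consm 0 m'].
Proof.
rewrite /Theta {1}/mmap; apply: eq_bigr => m' _; congr (_ * _).
by rewrite -(mmapX _ (thC R n)) -/(Theta _) ThetaX.
Qed.

Lemma thC_f_in (f : {poly R}) : f \is monic -> size f = n.+2 ->
  inI n.+1 (gens n.+1 f) (thC R n f).
Proof.
move=> fmon fsz; have [qq [qmon qsz fq]] := exists_qq fmon fsz.
by case: (Theta_ideal fmon fsz qmon qsz fq).
Qed.

Definition red_out (red : {poly R} -> {poly R}) (c0 : {poly R})
    (r' : {mpoly {poly R}[n]}) : {mpoly R[n.+1]} :=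
  \sum_(m' <- msupp r') \sum_(i < n.+1) (red (c0 * r'@_m'))`_i *: 'X_[consm i m'].

Lemma step_red (f : {poly R}) (red : {poly R} -> {poly R}) :
  f \is monic -> size f = n.+2 ->
  (forall c, (size (red c) <= n.+1)%N /\ exists d, c = d * f + red c) ->
  forall (r' : {mpoly {poly R}[n]}) c0, asupp r' ->
  asupp (red_out red c0 r') /\
  inI n.+1 (gens n.+1 f) (thC R n c0 * Theta r' - red_out red c0 r').
Proof.
move=> fmon fsz hred r' c0 hr; split.
  rewrite /red_out big_seq; apply: asupp_sum => m' hm'.
  apply: asupp_sum => i _; apply: asuppZ; apply: asuppX.
  rewrite artin_cons -ltnS ltn_ord /=; apply: hr.
  by rewrite -mcoeff_msupp.
rewrite Theta_expand mulr_sumr /red_out -sumrB; apply: inI_sum => m' _.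
have [hs [d ed]] := hred (c0 * r'@_m').
rewrite -(thC_mulX_wide _ hs) mulrA -rmorphM -mulrBl.
rewrite {1}ed rmorphD addrK rmorphM; apply: inIMr; apply: inIM.
exact: thC_f_in.
Qed.

Lemma thC_Xn_X j (m : 'X_{1..n}) :
  thC R n 'X^j * 'X_[consm 0 m] = 'X_[consm j m].
Proof. by rewrite rmorphXn thC_X mpolyXn -mpolyXD -consm_add0. Qed.
End Step.

Lemma exist_artin n : forall (R : comNzRingType) (f : {poly R}),
  f \is monic -> size f = n.+1 ->
  forall p : {mpoly R[n]}, exists p', asupp p' /\ inI n (gens n f) (p - p').
Proof.
elim: n => [|n IH] R f fmon fsz p.
  exists p; split; last by rewrite subrr; apply: inI0.
  by move=> m _; apply/forallP => -[].
suff hX : forall m : 'X_{1..n.+1},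
    exists r, asupp r /\ inI n.+1 (gens n.+1 f) ('X_[m] - r).
  rewrite (mpolyE p); elim: (msupp p) => [|m s [p1 [h1 h2]]].
    exists 0; rewrite big_nil subrr; split; last exact: inI0.
    by move=> m; rewrite mcoeff0 eqxx.
  have [r [hr1 hr2]] := hX m.
  exists (p@_m *: r + p1); split.
    apply/asuppP => m0 hm0; rewrite mcoeffD mcoeffZ.
    by rewrite (proj1 (asuppP r) hr1 _ hm0) (proj1 (asuppP p1) h1 _ hm0) mulr0 add0r.
  rewrite big_cons opprD addrACA -scalerBr; apply: inID => //.
  by rewrite -mul_mpolyC; apply: inIM.
move=> m.
have [qq [qmon qsz fq]] := exists_qq fmon fsz.
have [r' [hr' hI']] := IH _ qq qmon qsz 'X_[tailm m].
pose red c := Pdiv.CommonRing.rmodp c f.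
have hred c : (size (red c) <= n.+1)%N /\ exists d, c = d * f + red c.
  split; first by rewrite -ltnS -fsz Pdiv.CommonRing.ltn_rmodpN0 // monic_neq0.
  by exists (Pdiv.CommonRing.rdivp c f); apply: Pdiv.RingMonic.rdivp_eq.
have [ho1 ho2] := step_red fmon fsz hred 'X^(m ord0) hr'.
exists (red_out red 'X^(m ord0) r'); split => //.
have ThB (a b : {mpoly {poly R}[n]}) : Theta (a - b) = Theta a - Theta b by rewrite /Theta rmorphB.
have -> : 'X_[m] - red_out red 'X^(m ord0) r' =
    thC R n 'X^(m ord0) * Theta ('X_[tailm m] - r') +
    (thC R n 'X^(m ord0) * Theta r' - red_out red 'X^(m ord0) r').
  by rewrite ThB mulrBr ThetaX thC_Xn_X consm_tail addrA subrK.
apply: inID => //; apply: inIM.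
have [hT _] := Theta_ideal fmon fsz qmon qsz fq.
by have := inI_morph (phi := mmap (thC R n) (@thH R n)) hT hI'; exact.
Qed.


Local Notation mw  := mwiden.
Local Notation mpw := mpwiden.

Lemma VieteR (R : comNzRingType) :
  forall n,
       \prod_(i < n   ) ('X - ('X_i)%:P)
    =  \sum_ (k < n.+1) (-1)^+k *: (mesym n R k *: 'X^(n-k))
    :> {poly {mpoly R[n]}}.
Proof.
elim => [|n ih].
  by rewrite !big_ord0 big_ord1 mesym0E expr0 !scale1r.
pose F n k : {poly {mpoly R[n]}} :=
  (-1)^+k *: (mesym n R k *: 'X^(n-k)).
have Fn0 l: F l 0%N = 'X^l.
  by rewrite /F expr0 mesym0E !scale1r subn0.
have Fnn l: F l l = (-1)^+l *: \prod_(i < l) ('X_i)%:P.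
  by rewrite /F mesymnnE subnn expr0 alg_polyC rmorph_prod.
rewrite big_ord_recr /=; set p := (\prod_(_ < _) _).
have {p}->: p = mpw (\prod_(i < n) ('X - ('X_i)%:P)).
  rewrite /mpwiden rmorph_prod /=; apply/eq_bigr.
  move=> /= i _; rewrite raddfB /= map_polyX map_polyC /=.
  by rewrite mwidenX mnmwiden1.
rewrite {}ih (eq_bigr (F n.+1 \o val)) //; apply/esym.
rewrite (eq_bigr (F n \o val)) // -!(big_mkord xpredT).
rewrite raddf_sum /= mulrBr !mulr_suml.
rewrite big_nat_recl 1?[X in X-_]big_nat_recl //.
rewrite -!addrA !Fn0; congr (_ + _).
  by rewrite rmorphXn /= mpwidenX exprSr.
rewrite big_nat_recr 1?[X in _-X]big_nat_recr //=.
rewrite opprD !addrA; congr (_ + _); last first.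
  rewrite !Fnn !mpwidenZ !rmorphXn /= mwidenN1.
  rewrite exprS mulN1r scaleNr -scalerAl; congr (- (_ *: _)).
  rewrite big_ord_recr rmorph_prod /=; congr (_ * _).
  by apply/eq_bigr=> i _; rewrite mpwidenC mwidenX mnmwiden1.
rewrite -sumrB !big_seq; apply/eq_bigr => i /=.
rewrite mem_index_iota => /andP [_ lt_in]; rewrite {Fn0 Fnn}/F.
rewrite subSS mesymSS !mpwidenZ !rmorphXn /= !mwidenN1 !mpwidenX.
rewrite exprS mulN1r !scaleNr mulNr -opprD; congr (-_).
rewrite -!scalerAl -scalerDr; congr (_ *: _).
rewrite -exprSr -subSn // subSS scalerDl; congr (_ + _).
by rewrite -!mul_polyC !mulrA mulrAC polyCM.
Qed.

Lemma gens_Xn (K : comNzRingType) n k : (k < n)%N ->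
  gens n ('X^n : {poly K}) k = (-1) ^+ (n - k) * mesym n K (n - k).
Proof.
move=> kn; rewrite /gens coefB coef_map /= coefXn (ltn_eqF kn) rmorph0 subr0.
rewrite /Fpoly VieteR coef_sum.
have jn : (n - k < n.+1)%N by rewrite ltnS leq_subr.
rewrite (bigD1 (Ordinal jn)) //= big1 ?addr0.
  by rewrite !coefZ coefXn subKn ?(ltnW kn) // eqxx mulr1.
move=> j; rewrite -val_eqE /= => hj.
rewrite !coefZ coefXn.
case: eqP => [e|]; last by rewrite !mulr0.
exfalso; move/negP: hj; apply; apply/eqP.
have := ltn_ord j; rewrite ltnS => hjn.
by rewrite e subKn.
Qed.

Lemma esym_inI (K : fieldType) n (p : {mpoly K[n]}) :
  in_esym_ideal p -> inI n (gens n ('X^n : {poly K})) p.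
Proof.
case=> q ->; apply: inI_sum => i _; apply: inIM.
have hk : (n - i.+1 < n)%N by have := ltn_ord i; lia.
have := gens_Xn K hk; rewrite subKn // => e.
have -> : mesym n K i.+1 = (-1) ^+ i.+1 * gens n 'X^n (n - i.+1).
  by rewrite e mulrA -exprMn mulrNN mulr1 expr1n mul1r.
by apply: inIM; apply: inI_gen.
Qed.

Lemma asuppB (R : comNzRingType) n (p q : {mpoly R[n]}) :
  asupp p -> asupp q -> asupp (p - q).
Proof.
move=> /asuppP hp /asuppP hq; apply/asuppP => m hm.
by rewrite mcoeffB hp // hq // subr0.
Qed.

Unset Implicit Arguments.

Theorem lemma2p7 (K : fieldType) (n : nat) (hn : (0 < n)%N)
    (hchar : forall p : nat, p \in [pchar K] -> (n < p)%N)
    (m : 'X_{1..n}) (p' : {mpoly K[n]}) :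
  artin_reduction_of 'X_[m] p' ->
  forall m' : 'X_{1..n}, p'@_m' != 0 -> (m (Ordinal hn) <= m' (Ordinal hn))%N.
Proof.
move=> [hp' hI] m' hm'.
move: hn hchar m p' hp' hI m' hm'; case: n => // n hn _ m p' hp' hI m' hm'.
have -> : Ordinal hn = ord0 by apply: val_inj.
pose f : {poly K} := 'X^(n.+1).
have fmon : f \is monic by apply: monicXn.
have fsz : size f = n.+2 by rewrite size_polyXn.
have [qq [qmon qsz fq]] := exists_qq fmon fsz.
have [r' [hr' hI']] := exist_artin qmon qsz 'X_[tailm m].
pose red (c : {poly K}) := take_poly n.+1 c.
have hred c : (size (red c) <= n.+1)%N /\ exists d, c = d * f + red c.
  split; first exact: size_take_poly.
  by exists (drop_poly n.+1 c); rewrite addrC poly_take_drop.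
have [ho1 ho2] := step_red fmon fsz hred 'X^(m ord0) hr'.
set out := red_out red 'X^(m ord0) r' in ho1 ho2.
have hout : inI n.+1 (gens n.+1 f) ('X_[m] - out).
  have ThB (a b : {mpoly {poly K}[n]}) : Theta (a - b) = Theta a - Theta b.
    by rewrite /Theta rmorphB.
  have -> : 'X_[m] - out =
      thC K n 'X^(m ord0) * Theta ('X_[tailm m] - r') +
      (thC K n 'X^(m ord0) * Theta r' - out).
    by rewrite ThB mulrBr ThetaX thC_Xn_X consm_tail addrA subrK.
  apply: inID => //; apply: inIM.
  have [hT _] := Theta_ideal fmon fsz qmon qsz fq.
  by have := inI_morph (phi := mmap (thC K n) (@thH K n)) hT hI'; exact.
have eq' : p' = out.
  apply/eqP; rewrite -subr_eq0; apply/eqP.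
  apply: (uniq_artin fmon fsz); first by apply: asuppB.
  have -> : p' - out = ('X_[m] - out) - ('X_[m] - p').
    by rewrite opprB [RHS]addrC addrA subrK.
  by apply: inIB => //; apply: esym_inI.
move: hm'; rewrite eq' /out /red_out; apply: contraR; rewrite -ltnNge => hlt.
rewrite raddf_sum /= big1 ?eqxx // => m1 _.
rewrite raddf_sum /= big1 // => i _.
rewrite mcoeffZ mcoeffX.
case: eqP => [e|]; last by rewrite mulr0.
rewrite coef_take_poly ltn_ord coefXnM.
by rewrite -e consm0 in hlt; rewrite hlt mul0r.
Qed.
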